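(* Let $\Gamma=(G,w,\ell)$ be a tropical curve. Then the map $$\mathcal C_G\longrightarrow R^{\mathrm{trop}}_\Gamma,\qquad P\longmapsto [F_P]$$ is a bijection.
   Context: A tropical curve is a triple $\Gamma=(G,w,\ell)$ where $G=(V,E)$ is a finite connected graph (loops and multiple edges allowed), $w\colon V\to\mathbb Z_{\ge 0}$ is a weight function with $2w(v)-2+\deg_G(v)>0$ for all $v$ (degrees count loops twice), and $\ell\colon E\to\mathbb R_{>0}$. Its genus is $g=\sum_v w(v)+|E|-|V|+1$. $\Gamma$ is regarded as a metric space by identifying each edge $e$ with a segment (a circle if $e$ is a loop) of length $\ell(e)$, glued at vertices; $p_e$ denotes the mid-point of $e$. A divisor on $\Gamma$ is a finite formal $\mathbb Z$-combination of points of $\Gamma$. A rational function is a continuous piecewise linear $f\colon\Gamma\to\mathbb R$ with integer slopes and finitely many pieces; $\operatorname{div}(f)=\sum_p \operatorname{ord}_p(f)p$, where $\operatorname{ord}_p(f)$ is the sum of the outgoing slopes of $f$ at $p$. $\operatorname{Pic}(\Gamma)$ is the group of divisors modulo divisors of rational functions; $[D]$ denotes the class and $D\sim D'$ means $[D]=[D']$. $\mathcal C_G$ is the set of subsets $P\subseteq E$ such that every vertex has even degree in the subgraph spanned by $P$ (loops counting twice); it is an $\mathbb F_2$-vector space under symmetric difference (it is the kernel of the boundary map $\mathbb F_2^E\to\mathbb F_2^V$). For $P\in\mathcal C_G$ set $F_P:=\sum_{v\in V}\frac{\deg_P(v)}{2}v-\sum_{e\in P}p_e$. The set of square roots of zero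 is $R^{\mathrm{trop}}_\Gamma=\{[D]\in\operatorname{Pic}(\Gamma): [2D]=0\}$. *)

(* Defs.v *)
From HB Require Import structures.
From mathcomp Require Import all_boot all_order all_algebra.
From mathcomp Require Import reals.
Set Implicit Arguments. Unset Strict Implicit. Unset Printing Implicit Defensive.
Import Order.TTheory GRing.Theory Num.Theory.
Local Open Scope ring_scope.

(* G = (V, E) is a finite graph given by
   endpoint maps src, tgt : E -> V; loops (src e = tgt e) and multiple edges are
   allowed.  Each edge e is oriented (only for coordinates): the point at
   distance x from src e along e. *)
Record tcurve (R : realType) := TCurve {
  tV : finType;
  tE : finType;
  src : tE -> tV;
  tgt : tE -> tV;
  wt : tV -> nat;
  len : tE -> R;
  len_pos : forall e, 0 < len e;
  V_nonempty : (0 < #|tV|)%N;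
  connected : forall u v : tV,
    connect [rel a b | [exists e, ((src e == a) && (tgt e == b))
                                || ((src e == b) && (tgt e == a))]] u v;
  (* stability: 2 w(v) - 2 + deg(v) > 0, loops counted twice *)
  stable : forall v : tV,
    (2 < 2 * wt v + (#|[set e | src e == v]| + #|[set e | tgt e == v]|))%N
}.

Section Tropical.
Variable R : realType.
Variable G : tcurve R.

Local Notation V := (tV G).
Local Notation E := (tE G).

Definition degP (P : {set E}) (v : V) : nat :=
  (#|[set e in P | src e == v]| + #|[set e in P | tgt e == v]|)%N.

Definition in_cycle_space (P : {set E}) : bool :=
  [forall v, ~~ odd (degP P v)].

(* Points of Gamma: a vertex (inl v) or the point (inr (e, x)) of edge e at
   distance x from src e, with 0 < x < len e. *)
Definition point := (V + (E * R))%type.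

Definition valid_point (p : point) : Prop :=
  match p with
  | inl _ => True
  | inr (e, x) => 0 < x < len e
  end.

Definition midpoint (e : E) : point := inr (e, len e / 2).

Definition is_divisor (D : point -> int) : Prop :=
  (forall p, ~ valid_point p -> D p = 0) /\
  exists s : seq point, forall p, D p != 0 -> p \in s.

(* F_P = sum_v deg_P(v)/2 v - sum_{e in P} p_e *)
Definition F_ (P : {set E}) : point -> int :=
  fun p => match p with
  | inl v => ((degP P v)./2)%:Z
  | inr (e, x) => if (e \in P) && (x == len e / 2) then -1 else 0
  end.

Definition edge_val (f : point -> R) (e : E) (x : R) : R :=
  if x == 0 then f (inl (src e))
  else if x == len e then f (inl (tgt e))
  else f (inr (e, x)).

Definition is_rational (f : point -> R) : Prop :=
  forall e : E, exists (bs : seq R) (sl : seq int),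
    let pts := 0 :: rcons bs (len e) in
    [/\ sorted <%R pts, size sl = (size pts).-1 &
      forall i, (i < size sl)%N -> forall x,
        nth 0 pts i <= x <= nth 0 pts i.+1 ->
        edge_val f e x = edge_val f e (nth 0 pts i)
                         + (nth 0 sl i)%:~R * (x - nth 0 pts i)].

Definition out_slope (f : point -> R) (e : E) (x dir : R) (s : int) : Prop :=
  exists2 d : R, 0 < d & forall h, 0 < h < d ->
    edge_val f e (x + dir * h) = edge_val f e x + s%:~R * h.

Definition has_ord (f : point -> R) (p : point) (n : int) : Prop :=
  match p with
  | inl v => exists (a b : E -> int),
      (forall e, src e = v -> out_slope f e 0 1 (a e)) /\
      (forall e, tgt e = v -> out_slope f e (len e) (-1) (b e)) /\
      n = \sum_(e | src e == v) a e + \sum_(e | tgt e == v) b e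
  | inr (e, x) => exists a b : int,
      out_slope f e x 1 a /\ out_slope f e x (-1) b /\ n = a + b
  end.

Definition is_div_of (f : point -> R) (D : point -> int) : Prop :=
  forall p, valid_point p -> has_ord f p (D p).

Definition lin_equiv (D D' : point -> int) : Prop :=
  exists f, is_rational f /\ is_div_of f (fun p => D p - D' p).

Definition is_sqrt_zero (D : point -> int) : Prop :=
  is_divisor D /\ lin_equiv (fun p => 2 * D p) (fun _ => 0).

End Tropical.

(* Main.v *)
Require Import Defs.
From HB Require Import structures.
From mathcomp Require Import all_boot all_order all_algebra.
From mathcomp Require Import reals.
From mathcomp Require Import intdiv archimedean boolp zify ring lra.
Import Order.TTheory GRing.Theory Num.Theory.
Local Open Scope ring_scope.
Set Implicit Arguments. Unset Strict Implicit. Unset Printing Implicit Defensive.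

Section Aux.
Variable R : realType.
Variable G : tcurve R.
Local Notation E := (tE G).
Local Notation V := (tV G).
Local Notation L := (@len R G).
Local Notation pt := (point G).

Definition seg_lin (f : pt -> R) (e : E) (x y : R) (k : int) :=
  forall t, x <= t <= y -> edge_val f e t = edge_val f e x + k%:~R * (t - x).

Lemma seg_sub f e x y k x' y' : seg_lin f e x y k -> x <= x' -> x' <= y' -> y' <= y ->
  seg_lin f e x' y' k.
Proof.
move=> H h1 h2 h3 t /andP[t1 t2].
rewrite (H t); last by apply/andP; split; lra.
rewrite (H x'); last by apply/andP; split; lra.
ring.
Qed.

Lemma seg_cat f e x y z k : seg_lin f e x y k -> seg_lin f e y z k -> x <= y -> y <= z ->
  seg_lin f e x z k.
Proof.
move=> H1 H2 h1 h2 t /andP[t1 t2].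
have [ty|ty] := leP t y.
  by apply: H1; apply/andP; split.
rewrite H2; last by apply/andP; split; lra.
rewrite H1; last by apply/andP; split; lra.
ring.
Qed.

Lemma seg_uniq f e x y k x' y' k' a b : seg_lin f e x y k -> seg_lin f e x' y' k' ->
  x <= a -> x' <= a -> a < b -> b <= y -> b <= y' -> k = k'.
Proof.
move=> H1 H2 h1 h2 hab h3 h4.
have E1 := seg_sub H1 h1 (ltW hab) h3.
have E2 := seg_sub H2 h2 (ltW hab) h4.
have hb : a <= b <= b by apply/andP; split; [exact: ltW | exact: lexx].
have hne : b - a != 0 by rewrite subr_eq0 gt_eqF.
have := E1 b hb; rewrite (E2 b hb) => /addrI /(mulIf hne) /intr_inj.
by [].
Qed.

Lemma seg_fwd f e x y k : x < y -> seg_lin f e x y k -> out_slope f e x 1 k.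
Proof.
move=> hxy H; exists (y - x); first lra.
move=> h /andP[h1 h2]; rewrite mul1r (H (x + h)); last by apply/andP; split; lra.
ring.
Qed.

Lemma seg_bwd f e x y k : x < y -> seg_lin f e x y k -> out_slope f e y (-1) (-k).
Proof.
move=> hxy H; exists (y - x); first lra.
move=> h /andP[h1 h2]; rewrite (H y); last by apply/andP; split; lra.
rewrite (H (y + -1 * h)); last by apply/andP; split; lra.
rewrite mulrNz; ring.
Qed.

Lemma out_uniq (f : pt -> R) (e : E) (x dir : R) (a b : int) : out_slope f e x dir a -> out_slope f e x dir b -> a = b.
Proof.
move=> [d1 d1p H1] [d2 d2p H2].
have m1 : Num.min d1 d2 <= d1 by rewrite ge_min lexx.
have m2 : Num.min d1 d2 <= d2 by rewrite ge_min lexx orbT.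
have m0 : 0 < Num.min d1 d2 by rewrite lt_min d1p d2p.
set h := Num.min d1 d2 / 2.
have hne : h != 0 by rewrite /h; lra.
have c1 : 0 < h < d1 by rewrite /h; apply/andP; split; lra.
have c2 : 0 < h < d2 by rewrite /h; apply/andP; split; lra.
have := H1 h c1; rewrite (H2 h c2).
by move=> /addrI /(mulIf hne) /intr_inj.
Qed.

Lemma out_seg_fwd (f : pt -> R) (e : E) (x B : R) (a : int) : x < B -> out_slope f e x 1 a ->
  exists y, [/\ x < y, y <= B & seg_lin f e x y a].
Proof.
move=> hxB [d dp H].
have m1 : Num.min d (B - x) <= d by rewrite ge_min lexx.
have m2 : Num.min d (B - x) <= B - x by rewrite ge_min lexx orbT.
have m0 : 0 < Num.min d (B - x) by rewrite lt_min dp subr_gt0 hxB.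
set m := Num.min d (B - x) in m0 m1 m2 *.
exists (x + m / 2); split; [lra | lra |].
move=> t /andP[t1 t2].
have [->|tx] := eqVneq t x; first by rewrite subrr mulr0 addr0.
have tx' : x < t by rewrite lt_neqAle eq_sym tx t1.
rewrite -(H (t - x)); last by apply/andP; split; lra.
by have -> : x + 1 * (t - x) = t by ring.
Qed.

Lemma out_seg_bwd (f : pt -> R) (e : E) (x B : R) (b : int) : B < x -> out_slope f e x (-1) b ->
  exists y, [/\ B <= y, y < x & seg_lin f e y x (-b)].
Proof.
move=> hxB [d dp H].
have m1 : Num.min d (x - B) <= d by rewrite ge_min lexx.
have m2 : Num.min d (x - B) <= x - B by rewrite ge_min lexx orbT.
have m0 : 0 < Num.min d (x - B) by rewrite lt_min dp subr_gt0 hxB.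
set m := Num.min d (x - B) in m0 m1 m2 *.
exists (x - m / 2); split; [lra | lra |].
have Hy : edge_val f e (x - m / 2) = edge_val f e x + b%:~R * (m / 2).
  rewrite -H; last by apply/andP; split; lra.
  by have -> : x + -1 * (m / 2) = x - m / 2 by ring.
move=> t /andP[t1 t2]; rewrite Hy mulrNz.
have [->|tx] := eqVneq t x; first by ring.
have tx' : t < x by rewrite lt_neqAle tx t2.
have -> : edge_val f e t = edge_val f e x + b%:~R * (x - t).
  rewrite -H; last by apply/andP; split; lra.
  by have -> : x + -1 * (x - t) = t by ring.
ring.
Qed.

Definition pts_of (e : E) (bs : seq R) : seq R := 0 :: rcons bs (L e).

Definition edata (f : pt -> R) (e : E) (bs : seq R) (sl : seq int) :=
  [/\ sorted <%R (pts_of e bs), size sl = (size bs).+1 &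
      forall i, (i < size sl)%N ->
        seg_lin f e (nth 0 (pts_of e bs) i) (nth 0 (pts_of e bs) i.+1) (nth 0 sl i)].

Lemma rat_edata f : is_rational f -> forall e, exists bs sl, edata f e bs sl.
Proof.
move=> H e; have [bs [sl /= [s1 s2 s3]]] := H e; exists bs, sl; split => //.
by rewrite s2 /= size_rcons.
Qed.

Lemma size_pts e bs : size (pts_of e bs) = (size bs).+2.
Proof. by rewrite /pts_of /= size_rcons. Qed.

Lemma pts_last e bs : nth 0 (pts_of e bs) (size bs).+1 = L e.
Proof. by rewrite /pts_of /= nth_rcons ltnn eqxx. Qed.

Lemma nth_lt (s : seq R) i j : sorted <%R s -> (i < j)%N -> (j < size s)%N ->
  nth 0 s i < nth 0 s j.
Proof.
move=> hs ij js; apply: (sorted_ltn_nth lt_trans) => //; rewrite inE //.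
exact: ltn_trans ij js.
Qed.

Lemma nth_le (s : seq R) i j : sorted <%R s -> (i <= j)%N -> (j < size s)%N ->
  nth 0 s i <= nth 0 s j.
Proof.
move=> hs; rewrite leq_eqVlt => /orP[/eqP->|ij] js; first exact: lexx.
exact/ltW/nth_lt.
Qed.

Lemma locate (s : seq R) x : sorted <%R s -> nth 0 s 0 <= x -> x < last 0 s ->
  exists i, (i.+1 < size s)%N /\ nth 0 s i <= x < nth 0 s i.+1.
Proof.
elim: s => [|a s IH]; first by move=> _ /= h1 h2; lra.
case: s IH => [|b s] IH /=.
  by move=> _ h1 h2; lra.
move=> /andP[ab sb] h1 h2.
have [xb|bx] := ltP x b.
  by exists 0%N; split => //; rewrite h1 xb.
have [i [hi hx]] := IH sb bx h2.
by exists i.+1.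
Qed.

Definition PLe (f : pt -> R) (e : E) (S : seq R) := forall x y, 0 <= x -> x < y -> y <= L e ->
  (forall s, s \in S -> ~~ ((x < s) && (s < y))) -> exists k, seg_lin f e x y k.

Lemma edata_PL f e bs sl : edata f e bs sl -> PLe f e bs.
Proof.
case=> srt hsz hseg x y x0 xy yL hS.
have [i [hi /andP[h1 h2]]] : exists i, (i.+1 < size (pts_of e bs))%N /\
    nth 0 (pts_of e bs) i <= x < nth 0 (pts_of e bs) i.+1.
  apply: (@locate (pts_of e bs) x srt) => //.
  by rewrite /pts_of /= last_rcons; lra.
set w := nth 0 (pts_of e bs) i.+1 in h2.
have hyw : y <= w.
  have : w \in pts_of e bs by rewrite mem_nth.
  rewrite /pts_of in_cons mem_rcons in_cons => /or3P[/eqP w0|/eqP wL|wb].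
  - lra.
  - rewrite wL; lra.
  - by have := hS w wb; rewrite h2 /= -leNgt.
exists (nth 0 sl i); apply: seg_sub (hseg i _) h1 (ltW xy) hyw.
by rewrite hsz; rewrite size_pts in hi.
Qed.

Lemma exists_seq (n : nat) (P : nat -> int -> Prop) :
  (forall i, (i < n)%N -> exists k, P i k) ->
  exists sl : seq int, size sl = n /\ forall i, (i < n)%N -> P i (nth 0 sl i).
Proof.
elim: n => [|n IH] H; first by exists [::].
have [sl [hs hP]] := IH (fun i hi => H i (leqW hi)).
have [k hk] := H n (ltnSn n).
exists (rcons sl k); split; first by rewrite size_rcons hs.
move=> i; rewrite ltnS leq_eqVlt => /orP[/eqP->|hi].
  by rewrite nth_rcons hs ltnn eqxx.
by rewrite nth_rcons hs hi; apply: hP.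
Qed.

Lemma PL_edata f e S : PLe f e S -> exists bs sl, edata f e bs sl.
Proof.
move=> H.
set bs := sort <=%R (undup [seq s <- S | (0 < s) && (s < L e)]).
have bsin : forall s, (s \in bs) = (s \in S) && ((0 < s) && (s < L e)).
  by move=> s; rewrite mem_sort mem_undup mem_filter andbC.
have srt : sorted <%R (pts_of e bs).
  rewrite /pts_of /= rcons_path path_min_sorted; last first.
    by apply/allP => s; rewrite bsin => /andP[_ /andP[]].
  rewrite sort_lt_sorted undup_uniq /=.
  have := mem_last 0 bs; rewrite in_cons => /orP[/eqP->|]; first exact: len_pos.
  by rewrite bsin => /andP[_ /andP[]].
have hsz := size_pts e bs.
have [sl [hs hP]] : exists sl : seq int, size sl = (size bs).+1 /\
    forall i, (i < (size bs).+1)%N ->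
      seg_lin f e (nth 0 (pts_of e bs) i) (nth 0 (pts_of e bs) i.+1) (nth 0 sl i).
  apply: (@exists_seq _ (fun i k =>
    seg_lin f e (nth 0 (pts_of e bs) i) (nth 0 (pts_of e bs) i.+1) k)) => i hi.
  have p0 : 0 <= nth 0 (pts_of e bs) i.
    by have := nth_le srt (leq0n i) (_ : (i < size (pts_of e bs))%N); apply; rewrite hsz ltnW.
  have p1 : nth 0 (pts_of e bs) i < nth 0 (pts_of e bs) i.+1.
    by apply: nth_lt => //; rewrite hsz.
  have p2 : nth 0 (pts_of e bs) i.+1 <= L e.
    rewrite -(pts_last e bs); apply: nth_le => //; by rewrite hsz.
  apply: H => // s sS; apply/negP => /andP[s1 s2].
  have sb : s \in pts_of e bs.
    have s0 : 0 < s := le_lt_trans p0 s1.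
    have sL : s < L e := lt_le_trans s2 p2.
    by rewrite /pts_of in_cons mem_rcons in_cons bsin sS s0 sL !orbT.
  have jl : (index s (pts_of e bs) < size (pts_of e bs))%N by rewrite index_mem.
  have hj := nth_index 0 sb.
  have [ji|ij] := leqP (index s (pts_of e bs)) i.
    have := nth_le srt ji (_ : (i < size (pts_of e bs))%N); rewrite hj.
    by move=> /(_ _); rewrite hsz ltnW //; lra.
  have := nth_le srt ij jl; rewrite hj; lra.
by exists bs, sl; rewrite /edata hs; split.
Qed.

Lemma PL_rat f : (forall e, exists S, PLe f e S) -> is_rational f.
Proof.
move=> H e; have [S hS] := H e; have [bs [sl [s1 s2 s3]]] := PL_edata hS.
by exists bs, sl => /=; split => //; rewrite s2 size_rcons.
Qed.

Lemma rat_PL f : is_rational f -> forall e, exists S, PLe f e S.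
Proof.
move=> H e; have [bs [sl hd]] := rat_edata H e; exists bs; exact: edata_PL hd.
Qed.

Lemma pts_inner e bs j : sorted <%R (pts_of e bs) -> (0 < j)%N -> (j < (size bs).+1)%N ->
  0 < nth 0 (pts_of e bs) j < L e.
Proof.
move=> srt j0 js; apply/andP; split.
  by have := nth_lt srt j0 (_ : (j < size (pts_of e bs))%N); apply; rewrite size_pts ltnW.
by rewrite -(pts_last e bs); apply: nth_lt => //; rewrite size_pts.
Qed.

Lemma jump f e bs sl j n : edata f e bs sl -> (0 < j)%N -> (j < size sl)%N ->
  has_ord f (inr (e, nth 0 (pts_of e bs) j)) n -> n = nth 0 sl j - nth 0 sl j.-1.
Proof.
case=> srt hsz hseg j0 js [a [b [ha [hb ->]]]].
have hsp := size_pts e bs.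
have lt1 : nth 0 (pts_of e bs) j < nth 0 (pts_of e bs) j.+1.
  by apply: nth_lt; rewrite // hsp -hsz.
have lt2 : nth 0 (pts_of e bs) j.-1 < nth 0 (pts_of e bs) j.
  apply: nth_lt => //; first by rewrite ltn_predL.
  by rewrite hsp; apply: ltnW; rewrite -hsz.
have e1 := out_uniq ha (seg_fwd lt1 (hseg j js)).
have h2 := hseg j.-1 (leq_ltn_trans (leq_pred j) js); rewrite prednK // in h2.
have e2 := out_uniq hb (seg_bwd lt2 h2).
by rewrite e1 e2.
Qed.

Lemma slope_rep f e bs sl x y k : edata f e bs sl -> 0 <= x -> x < y -> y <= L e ->
  seg_lin f e x y k -> exists2 i, (i < size sl)%N & k = nth 0 sl i.
Proof.
case=> srt hsz hseg x0 xy yL H.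
have [i [hi /andP[h1 h2]]] : exists i, (i.+1 < size (pts_of e bs))%N /\
    nth 0 (pts_of e bs) i <= x < nth 0 (pts_of e bs) i.+1.
  apply: (@locate (pts_of e bs) x srt) => //.
  by rewrite /pts_of /= last_rcons; lra.
have il : (i < size sl)%N by rewrite hsz; rewrite size_pts in hi.
exists i => //.
apply: (seg_uniq (a := x) (b := Num.min y (nth 0 (pts_of e bs) i.+1)) H (hseg i il)).
- exact: lexx.
- exact: h1.
- by rewrite lt_min xy h2.
- by rewrite ge_min lexx.
- by rewrite ge_min lexx orbT.
Qed.

Lemma par_edge f (D : pt -> int) e : is_rational f -> is_div_of f (fun p => 2 * D p - 0) ->
  forall x y k x' y' k', 0 <= x -> x < y -> y <= L e -> 0 <= x' -> x' < y' -> y' <= L e ->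
  seg_lin f e x y k -> seg_lin f e x' y' k' -> (2 %| k - k')%Z.
Proof.
move=> hr hd x y k x' y' k' h1 h2 h3 h4 h5 h6 H H'.
have [bs [sl hed]] := rat_edata hr e.
have hed' := hed; case: hed' => srt hsz hseg.
have hall : forall i, (i < size sl)%N -> (2 %| nth 0 sl i - nth 0 sl 0)%Z.
  elim=> [|i IH] hi; first by rewrite subrr dvdz0.
  have hin := pts_inner srt (ltn0Sn i) (_ : (i.+1 < (size bs).+1)%N).
  rewrite -hsz in hin.
  have /= hj := jump hed (ltn0Sn i) hi (hd (inr (e, nth 0 (pts_of e bs) i.+1)) (hin hi)).
  have IH' := IH (ltnW hi).
  have -> : nth 0 sl i.+1 - nth 0 sl 0 =
      (nth 0 sl i.+1 - nth 0 sl i) + (nth 0 sl i - nth 0 sl 0) by ring.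
  rewrite -hj subr0; apply: rpredD => //; exact: dvdz_mulr (dvdzz 2) .
have [i hi ->] := slope_rep hed h1 h2 h3 H.
have [i' hi' ->] := slope_rep hed h4 h5 h6 H'.
have -> : nth 0 sl i - nth 0 sl i' = (nth 0 sl i - nth 0 sl 0) - (nth 0 sl i' - nth 0 sl 0)
  by ring.
exact: rpredB (hall i hi) (hall i' hi').
Qed.

Lemma harm_edge f e : is_rational f -> is_div_of f (fun _ => 0) ->
  exists s, seg_lin f e 0 (L e) s.
Proof.
move=> hr hd; have [bs [sl hed]] := rat_edata hr e.
have hed' := hed; case: hed' => srt hsz hseg.
have hsp := size_pts e bs.
have hall : forall i, (i < size sl)%N -> nth 0 sl i = nth 0 sl 0 /\
   seg_lin f e 0 (nth 0 (pts_of e bs) i.+1) (nth 0 sl 0).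
  elim=> [|i IH] hi.
    by split => //; exact: (hseg 0%N hi).
  have [IH1 IH2] := IH (ltnW hi).
  have hin := pts_inner srt (ltn0Sn i) (_ : (i.+1 < (size bs).+1)%N).
  rewrite -hsz in hin.
  have /= hj := jump hed (ltn0Sn i) hi (hd (inr (e, nth 0 (pts_of e bs) i.+1)) (hin hi)).
  have eq1 : nth 0 sl i.+1 = nth 0 sl 0.
    by rewrite -IH1; apply/eqP; rewrite -subr_eq0 -hj.
  split => //; apply: (seg_cat IH2); first by rewrite -eq1; exact: hseg.
    by have /andP[+ _] := hin hi; apply: ltW.
  change (nth 0 (pts_of e bs) i.+1 <= nth 0 (pts_of e bs) i.+2).
  by apply: ltW; apply: nth_lt => //; rewrite hsp -hsz.
exists (nth 0 sl 0).
have := (hall (size bs) _).2; rewrite pts_last; apply; by rewrite hsz.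
Qed.

Lemma ev_tgt (f : pt -> R) e : edge_val f e (L e) = f (inl (tgt e)).
Proof. by rewrite /edge_val (gt_eqF (len_pos e)) eqxx. Qed.

Lemma ev_src (f : pt -> R) e : edge_val f e 0 = f (inl (src e)).
Proof. by rewrite /edge_val eqxx. Qed.

Lemma harm f : is_rational f -> is_div_of f (fun _ => 0) -> forall e, seg_lin f e 0 (L e) 0.
Proof.
move=> hr hd.
have [s hs] := choice (fun e => @harm_edge f e hr hd).
have hdiff : forall e, f (inl (tgt e)) - f (inl (src e)) = (s e)%:~R * L e.
  move=> e; have := hs e (L e); rewrite ev_tgt ev_src => ->.
    by rewrite subr0; ring.
  by apply/andP; split; [exact/ltW/len_pos | exact: lexx].
have hv : forall v, \sum_(e | tgt e == v) s e - \sum_(e | src e == v) s e = 0.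
  move=> v; have [a [b [ha [hb /= h0]]]] := hd (inl v) I.
  have e1 : \sum_(e | src e == v) a e = \sum_(e | src e == v) s e.
    apply: eq_bigr => e /eqP he.
    exact: out_uniq (ha e he) (seg_fwd (len_pos e) (hs e)).
  have e2 : \sum_(e | tgt e == v) b e = - \sum_(e | tgt e == v) s e.
    rewrite -sumrN; apply: eq_bigr => e /eqP he.
    exact: out_uniq (hb e he) (seg_bwd (len_pos e) (hs e)).
  rewrite e1 e2 in h0; rewrite -[LHS]opprK opprB -h0; ring.
have hsplit : forall (p : E -> V),
    \sum_e (s e)%:~R * f (inl (p e)) = \sum_v f (inl v) * (\sum_(e | p e == v) s e)%:~R.
  move=> p; rewrite (partition_big p predT) //=; apply: eq_bigr => v _.
  rewrite rmorph_sum mulr_sumr; apply: eq_bigr => e /eqP ->; by rewrite mulrC.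
have htot : \sum_e (s e)%:~R * ((s e)%:~R * L e) = 0.
  transitivity (\sum_e ((s e)%:~R * f (inl (tgt e)) - (s e)%:~R * f (inl (src e)))).
    by apply: eq_bigr => e _; rewrite -hdiff; ring.
  rewrite sumrB !hsplit -sumrB big1 // => v _.
  by rewrite -mulrBr -rmorphB hv mulr0.
have hnn : forall e, true -> 0 <= (s e)%:~R * ((s e)%:~R * L e).
  move=> e _; rewrite mulrA; apply: mulr_ge0; last exact/ltW/len_pos.
  by rewrite -expr2 sqr_ge0.
move=> e; have := @psumr_eq0P _ _ _ _ hnn htot e isT.
move/eqP; rewrite mulrA mulf_eq0 (gt_eqF (len_pos e)) orbF mulf_eq0 orbb intr_eq0 => /eqP s0.
by have := hs e; rewrite s0.
Qed.

Definition comb (a b : R) (f1 f2 : pt -> R) : pt -> R := fun p => a * f1 p + b * f2 p.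

Lemma ev_comb a b f1 f2 e t :
  edge_val (comb a b f1 f2) e t = a * edge_val f1 e t + b * edge_val f2 e t.
Proof. by rewrite /edge_val /comb; case: ifP => _ //; case: ifP. Qed.

Lemma seg_comb a b f1 f2 e x y k1 k2 (s : int) : seg_lin f1 e x y k1 -> seg_lin f2 e x y k2 ->
  s%:~R = a * k1%:~R + b * k2%:~R -> seg_lin (comb a b f1 f2) e x y s.
Proof. by move=> H1 H2 hs t ht; rewrite !ev_comb H1 // H2 // hs; ring. Qed.

Lemma out_comb a b f1 f2 e x dir k1 k2 (s : int) :
  out_slope f1 e x dir k1 -> out_slope f2 e x dir k2 ->
  s%:~R = a * k1%:~R + b * k2%:~R -> out_slope (comb a b f1 f2) e x dir s.
Proof.
move=> [d1 d1p H1] [d2 d2p H2] hs.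
exists (Num.min d1 d2); first by rewrite lt_min d1p d2p.
move=> h /andP[h0]; rewrite lt_min => /andP[hd1 hd2].
rewrite !ev_comb (H1 h); last by rewrite h0 hd1.
rewrite (H2 h); last by rewrite h0 hd2.
rewrite hs; ring.
Qed.

Lemma PL_comb a b f1 f2 e S1 S2 : PLe f1 e S1 -> PLe f2 e S2 ->
  (forall x y k1 k2, 0 <= x -> x < y -> y <= L e ->
     seg_lin f1 e x y k1 -> seg_lin f2 e x y k2 ->
     exists s : int, s%:~R = a * k1%:~R + b * k2%:~R) ->
  PLe (comb a b f1 f2) e (S1 ++ S2).
Proof.
move=> H1 H2 Hi x y x0 xy yL hS.
have hS1 : forall s, s \in S1 -> ~~ ((x < s) && (s < y)).
  by move=> s hs; apply: hS; rewrite mem_cat hs.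
have hS2 : forall s, s \in S2 -> ~~ ((x < s) && (s < y)).
  by move=> s hs; apply: hS; rewrite mem_cat hs orbT.
have [k1 h1] := H1 x y x0 xy yL hS1.
have [k2 h2] := H2 x y x0 xy yL hS2.
have [s hs] := Hi x y k1 k2 x0 xy yL h1 h2.
by exists s; apply: seg_comb h1 h2 hs.
Qed.

Definition vdir e x (dir : R) := (0 <= x < L e /\ dir = 1) \/ (0 < x <= L e /\ dir = -1).

Lemma flK (r : R) : (exists s : int, s%:~R = r) -> (Num.floor r)%:~R = r.
Proof. by case=> s <-; rewrite intrKfloor. Qed.

Lemma ord_comb a b f1 f2 p n1 n2 n :
  (forall e x dir k1 k2, vdir e x dir -> out_slope f1 e x dir k1 -> out_slope f2 e x dir k2 ->
     exists s : int, s%:~R = a * k1%:~R + b * k2%:~R) ->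
  valid_point p -> has_ord f1 p n1 -> has_ord f2 p n2 ->
  n%:~R = a * n1%:~R + b * n2%:~R -> has_ord (comb a b f1 f2) p n.
Proof.
case: p => [v|[e x]] Hi /=.
  move=> _ [a1 [b1 [ha1 [hb1 ->]]]] [a2 [b2 [ha2 [hb2 ->]]]] hn.
  have HA : forall e, src e = v ->
      (Num.floor (a * (a1 e)%:~R + b * (a2 e)%:~R))%:~R = a * (a1 e)%:~R + b * (a2 e)%:~R.
    move=> e he; apply: flK; apply: (Hi e 0 1) (ha1 e he) (ha2 e he).
    by left; split => //; rewrite lexx len_pos.
  have HB : forall e, tgt e = v ->
      (Num.floor (a * (b1 e)%:~R + b * (b2 e)%:~R))%:~R = a * (b1 e)%:~R + b * (b2 e)%:~R.
    move=> e he; apply: flK; apply: (Hi e (L e) (-1)) (hb1 e he) (hb2 e he).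
    by right; split => //; rewrite lexx len_pos.
  exists (fun e => Num.floor (a * (a1 e)%:~R + b * (a2 e)%:~R)).
  exists (fun e => Num.floor (a * (b1 e)%:~R + b * (b2 e)%:~R)).
  split; first by move=> e he; apply: out_comb (ha1 e he) (ha2 e he) (HA e he).
  split; first by move=> e he; apply: out_comb (hb1 e he) (hb2 e he) (HB e he).
  apply: (@intr_inj R); rewrite hn !rmorphD !rmorph_sum /=.
  rewrite (eq_bigr _ (fun e he => HA e (eqP he))) (eq_bigr _ (fun e he => HB e (eqP he))).
  rewrite !big_split /= -!mulr_sumr; ring.
move=> /andP[x0 xL] [a1 [b1 [ha1 [hb1 ->]]]] [a2 [b2 [ha2 [hb2 ->]]]] hn.
have HA : (Num.floor (a * a1%:~R + b * a2%:~R))%:~R = a * a1%:~R + b * a2%:~R.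
  apply: flK; apply: (Hi e x 1) ha1 ha2.
  by left; split => //; rewrite xL ltW.
have HB : (Num.floor (a * b1%:~R + b * b2%:~R))%:~R = a * b1%:~R + b * b2%:~R.
  apply: flK; apply: (Hi e x (-1)) hb1 hb2.
  by right; split => //; rewrite x0 ltW.
exists (Num.floor (a * a1%:~R + b * a2%:~R)), (Num.floor (a * b1%:~R + b * b2%:~R)).
split; first exact: out_comb ha1 ha2 HA.
split; first exact: out_comb hb1 hb2 HB.
apply: (@intr_inj R); rewrite hn !rmorphD /= HA HB; ring.
Qed.

Definition cP (P : {set E}) e : int := if e \in P then 1 else 0.

Definition tent (P : {set E}) : pt -> R := fun p =>
  match p with
  | inl _ => 0
  | inr (e, x) => if e \in P then (if x <= L e / 2 then x else L e - x) else 0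
  end.

Lemma ev_tent P e t : edge_val (tent P) e t =
  if e \in P then (if t <= L e / 2 then t else L e - t) else 0.
Proof.
rewrite /edge_val.
have Lp := len_pos e.
case: eqP => [->|_].
  have -> : (0 <= L e / 2) = true by apply/idP; lra.
  by case: (e \in P).
case: eqP => [->|_] //.
have -> : (L e <= L e / 2) = false by apply/negbTE; rewrite -ltNge; lra.
by rewrite subrr; case: (e \in P).
Qed.

Lemma tent_seg1 P e : seg_lin (tent P) e 0 (L e / 2) (cP P e).
Proof.
have Lp := len_pos e.
move=> t /andP[t0 t1]; rewrite !ev_tent /cP t1.
have -> : (0 <= L e / 2) = true by apply/idP; lra.
by case: (e \in P); ring.
Qed.

Lemma tent_seg2 P e : seg_lin (tent P) e (L e / 2) (L e) (- cP P e).
Proof.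
have Lp := len_pos e.
move=> t /andP[t0 t1]; rewrite !ev_tent /cP lexx.
case: leP => ht.
  have -> : t = L e / 2 by lra.
  by case: (e \in P); rewrite ?oppr0 ?mulrNz ?mulr1z ?mulr0z; ring.
case: (e \in P); rewrite ?oppr0 ?mulrNz ?mulr1z ?mulr0z; lra.
Qed.

Lemma sum_cP (P : {set E}) (q : pred E) :
  \sum_(e | q e) cP P e = #|[set e in P | q e]|%:Z.
Proof.
rewrite /cP -big_mkcondr /= -sum1_card.
by rewrite -natz natr_sum; apply: eq_bigl => e; rewrite !inE andbC.
Qed.

Lemma tent_ord_v P v : has_ord (tent P) (inl v) (degP P v)%:Z.
Proof.
exists (cP P), (cP P); split.
  move=> e _; apply: (seg_fwd _ (@tent_seg1 P e)).
  by have := len_pos e; lra.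
split.
  move=> e _; rewrite -[cP P e]opprK; apply: (seg_bwd _ (@tent_seg2 P e)).
  by have := len_pos e; lra.
by rewrite !sum_cP /degP PoszD.
Qed.

Lemma tent_ord_e P e x : 0 < x < L e ->
  has_ord (tent P) (inr (e, x)) (if (e \in P) && (x == L e / 2) then -2 else 0).
Proof.
move=> /andP[x0 xL].
have s1 := @tent_seg1 P e; have s2 := @tent_seg2 P e.
have [xl|xg|xe] := ltgtP x (L e / 2).
- exists (cP P e), (- cP P e); split.
    apply: (seg_fwd xl) (seg_sub s1 (ltW x0) (ltW xl) (lexx _)).
  split; first by apply: (seg_bwd x0) (seg_sub s1 (lexx _) (ltW x0) (ltW xl)).
  by rewrite andbF subrr.
- exists (- cP P e), (cP P e); split.
    by apply: (seg_fwd xL) (seg_sub s2 (ltW xg) (ltW xL) (lexx _)).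
  split; last by rewrite andbF addNr.
  rewrite -[X in out_slope _ _ _ _ X]opprK.
  by apply: (seg_bwd xg) (seg_sub s2 (lexx _) (ltW xg) (ltW xL)).
- exists (- cP P e), (- cP P e); split.
    by rewrite xe; apply: (seg_fwd _ s2); have := len_pos e; lra.
  split.
    by rewrite xe; apply: (seg_bwd _ s1); have := len_pos e; lra.
  by rewrite andbT /cP; case: (e \in P).
Qed.

Lemma half_int (k1 k2 : int) : (2 %| k1 - k2)%Z ->
  exists s : int, s%:~R = 1/2 * k1%:~R + (-1/2) * k2%:~R :> R.
Proof.
move=> h; exists ((k1 - k2) %/ 2)%Z.
have := divzK h => /(congr1 (fun z : int => (z%:~R : R))).
set q := ((k1 - k2) %/ 2)%Z => /= E.
have : (q%:~R : R) * 2 - (k1%:~R - k2%:~R) = (q*2)%:~R - (k1 - k2)%:~R by ring.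
rewrite E subrr => /eqP; rewrite subr_eq0 => /eqP.
lra.
Qed.

Lemma tent_PL P e : PLe (tent P) e [:: L e / 2].
Proof.
move=> x y x0 xy yL /(_ (L e / 2)); rewrite mem_seq1 eqxx => /(_ isT).
rewrite negb_and -!leNgt => /orP[h|h].
  by exists (- cP P e); exact: seg_sub (@tent_seg2 P e) h (ltW xy) yL.
by exists (cP P e); exact: seg_sub (@tent_seg1 P e) x0 (ltW xy) h.
Qed.

Lemma tent_slope P e x y k : 0 <= x -> x < y -> y <= L e -> seg_lin (tent P) e x y k ->
  k = cP P e \/ k = - cP P e.
Proof.
move=> x0 xy yL H.
have [xl|xg] := ltP x (L e / 2).
  left; apply: (seg_uniq (a := x) (b := Num.min y (L e / 2)) H (@tent_seg1 P e)).
  - exact: lexx.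
  - exact: x0.
  - by rewrite lt_min xy xl.
  - by rewrite ge_min lexx.
  - by rewrite ge_min lexx orbT.
right; apply: (seg_uniq (a := x) (b := y) H (@tent_seg2 P e)) => //; exact: lexx.
Qed.

Lemma tent_out P e x dir a : vdir e x dir -> out_slope (tent P) e x dir a ->
  a = cP P e \/ a = - cP P e.
Proof.
case=> [[/andP[x0 xL] ->]|[/andP[x0 xL] ->]] H.
  have [y [xy yL hs]] := out_seg_fwd xL H.
  exact: tent_slope x0 xy yL hs.
have [y [y0 yx hs]] := out_seg_bwd x0 H.
by have := tent_slope y0 yx xL hs; case=> h; [right|left]; lia.
Qed.

Definition tord P (p : pt) : int :=
  match p with
  | inl v => (degP P v)%:Z
  | inr (e, x) => if (e \in P) && (x == L e / 2) then -2 else 0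
  end.

Lemma tent_ord P p : valid_point p -> has_ord (tent P) p (tord P p).
Proof. by case: p => [v|[e x]] /= hv; [apply: tent_ord_v | apply: tent_ord_e]. Qed.

Lemma tord_F P p : in_cycle_space P -> tord P p = 2 * F_ P p.
Proof.
move=> hP; case: p => [v|[e x]] /=.
  by have := forallP hP v; lia.
by case: ifP.
Qed.

Section Par.
Variables (f : pt -> R) (D : pt -> int).
Hypotheses (hr : is_rational f) (hd : is_div_of f (fun p => 2 * D p - 0)).

Definition Pf : {set E} :=
  [set e | `[< exists x y k, [/\ 0 <= x, x < y, y <= L e, seg_lin f e x y k & ~~ (2 %| k)%Z] >]].

Lemma parP e x y k : 0 <= x -> x < y -> y <= L e -> seg_lin f e x y k ->
  (2 %| k - cP Pf e)%Z.
Proof.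
move=> x0 xy yL H; rewrite /cP inE; case: asboolP => [[x' [y' [k' [h1 h2 h3 H' hk]]]]|hno].
  have := par_edge hr hd x0 xy yL h1 h2 h3 H H'.
  move: hk; lia.
rewrite subr0; apply/negPn/negP => hk; apply: hno.
by exists x, y, k; split.
Qed.

Lemma par_out e x dir a : vdir e x dir -> out_slope f e x dir a -> (2 %| a - cP Pf e)%Z.
Proof.
case=> [[/andP[x0 xL] ->]|[/andP[x0 xL] ->]] H.
  have [y [xy yL hs]] := out_seg_fwd xL H.
  exact: parP x0 xy yL hs.
have [y [y0 yx hs]] := out_seg_bwd x0 H.
have := parP y0 yx xL hs; lia.
Qed.

End Par.

End Aux.

Theorem proposition3p1 (R : realType) (G : tcurve R) :
  [/\ (forall P : {set tE G}, in_cycle_space P -> is_sqrt_zero (F_ P)),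
      (forall P Q : {set tE G}, in_cycle_space P -> in_cycle_space Q ->
         lin_equiv (F_ P) (F_ Q) -> P = Q) &
      (forall D : point G -> int, is_sqrt_zero D ->
         exists2 P : {set tE G}, in_cycle_space P & lin_equiv D (F_ P))].
Proof.
split.
- move=> P hP; split.
  + split.
    * case=> [v|[e x]] /= hv; first by exfalso; apply: hv.
      case: ifP => // /andP[_ /eqP xe]; exfalso; apply: hv.
      by rewrite xe; have := len_pos e; lra.
    * exists ([seq inl v | v <- enum (tV G)] ++ [seq inr (e, len e / 2) | e <- enum (tE G)]).
      case=> [v|[e x]] /= hne; rewrite mem_cat.
        by apply/orP; left; apply/mapP; exists v => //; rewrite mem_enum.
      move: hne; case: ifP => // /andP[_ /eqP ->] _.
      by apply/orP; right; apply/mapP; exists e => //; rewrite mem_enum.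
  + exists (tent P); split.
      by apply: PL_rat => e; exists [:: len e / 2]; exact: tent_PL.
    move=> p hp /=; rewrite subr0 -tord_F //; exact: tent_ord.
- move=> P Q hP hQ [f [hr hd]].
  set T := comb 1 (-1) (tent P) (tent Q).
  set k := comb 2 (-1) f T.
  have rT : forall e, exists S, PLe T e S.
    move=> e; exists ([:: len e / 2] ++ [:: len e / 2]).
    apply: PL_comb; [exact: tent_PL | exact: tent_PL |].
    by move=> x y k1 k2 _ _ _ _ _; exists (k1 - k2); rewrite rmorphB /=; ring.
  have kr : is_rational k.
    apply: PL_rat => e.
    have [S1 h1] := rat_PL hr e; have [S2 h2] := rT e.
    exists (S1 ++ S2); apply: PL_comb h1 h2 _.
    by move=> x y k1 k2 _ _ _ _ _; exists (2 * k1 - k2); rewrite rmorphB rmorphM /=; ring.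
  have Td : forall p, valid_point p -> has_ord T p (2 * F_ P p - 2 * F_ Q p).
    move=> p hp; apply: ord_comb hp (tent_ord P hp) (tent_ord Q hp) _.
      by move=> e x dir k1 k2 _ _ _; exists (k1 - k2); rewrite rmorphB /=; ring.
    rewrite !tord_F //; rewrite rmorphB /=; ring.
  have kd : is_div_of k (fun _ => 0).
    move=> p hp; apply: ord_comb hp (hd p hp) (Td p hp) _.
      by move=> e x dir k1 k2 _ _ _; exists (2 * k1 - k2); rewrite rmorphB rmorphM /=; ring.
    rewrite /= !rmorphB /=; ring.
  have hk := harm kr kd.
  apply/setP => e.
  have [bs [sl [srt hsz hseg]]] := rat_edata hr e.
  have Lp := len_pos e.
  have p1 : 0 < nth 0 (pts_of e bs) 1.
    by have := nth_lt srt (ltn0Sn 0) (_ : (1 < size (pts_of e bs))%N); apply; rewrite size_pts.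
  have m0 : 0 < Num.min (nth 0 (pts_of e bs) 1) (len e / 2).
    by rewrite lt_min p1 /=; lra.
  have m1 : Num.min (nth 0 (pts_of e bs) 1) (len e / 2) <= nth 0 (pts_of e bs) 1.
    by rewrite ge_min lexx.
  have m2 : Num.min (nth 0 (pts_of e bs) 1) (len e / 2) <= len e / 2.
    by rewrite ge_min lexx orbT.
  set y := Num.min (nth 0 (pts_of e bs) 1) (len e / 2) in m0 m1 m2.
  have sf : seg_lin f e 0 y (nth 0 sl 0).
    by apply: seg_sub (hseg 0%N _) (lexx _) (ltW m0) m1; rewrite hsz.
  have sT : seg_lin T e 0 y (cP P e - cP Q e).
    apply: (seg_comb (seg_sub (@tent_seg1 _ _ P e) (lexx _) (ltW m0) m2)
                     (seg_sub (@tent_seg1 _ _ Q e) (lexx _) (ltW m0) m2)).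
    by rewrite rmorphB /=; ring.
  have sk : seg_lin k e 0 y (2 * nth 0 sl 0 - (cP P e - cP Q e)).
    by apply: (seg_comb sf sT); rewrite rmorphB rmorphM /=; ring.
  have := seg_uniq (a := 0) (b := y) sk (hk e) (lexx _) (lexx _) m0 (lexx _) _.
  have yL : y <= len e by lra.
  move=> /(_ yL); rewrite /cP.
  by case: (e \in P); case: (e \in Q) => //; lia.
- move=> D [hD [f [hr hd]]].
  have hd' : is_div_of f (fun p => 2 * D p - 0) := hd.
  have hcyc : in_cycle_space (Pf f).
    apply/forallP => v.
    have [a [b [ha [hb /= h0]]]] := hd' (inl v) I.
    have : (2 %| (degP (Pf f) v)%:Z - (2 * D (inl v) - 0))%Z.
      rewrite h0 /degP PoszD -!sum_cP.
      have -> : forall (A B C D : int), A + B - (C + D) = (A - C) + (B - D) by move=> *; ring.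
      rewrite -!sumrB; apply: rpredD; apply: rpred_sum => e /eqP he.
        have hv : vdir e 0 1 by left; split => //; rewrite lexx len_pos.
        by have := par_out hr hd' hv (ha e he); rewrite -opprB rpredN.
      have hv : vdir e (len e) (-1) by right; split => //; rewrite lexx len_pos.
      by have := par_out hr hd' hv (hb e he); rewrite -opprB rpredN.
    lia.
  exists (Pf f) => //.
  exists (comb (1/2) (-1/2) f (tent (Pf f))); split.
    apply: PL_rat => e.
    have [S1 h1] := rat_PL hr e.
    exists (S1 ++ [:: len e / 2]); apply: (PL_comb h1 (@tent_PL _ _ (Pf f) e)).
    move=> x y k1 k2 x0 xy yL s1 s2; apply: half_int.
    have := parP hr hd' x0 xy yL s1.
    by have := tent_slope x0 xy yL s2; case=> ->; lia.
  move=> p hp; apply: ord_comb hp (hd' p hp) (tent_ord (Pf f) hp) _.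
    move=> e x dir k1 k2 hv o1 o2; apply: half_int.
    have := par_out hr hd' hv o1.
    by have := tent_out hv o2; case=> ->; lia.
  rewrite tord_F //; rewrite !rmorphB !rmorphM /=; field.
all: done.
Qed.
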